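(* Let $c_q=\gamma\min\big(\frac{\tau_0^2}{2\kappa},\frac{\tau_0}{\kappa_\nabla},\frac{1}{\kappa_{\mathrm{hess}}}\big)$ and suppose $k$ is such that $\|q_k-q^\star\|_2<c_q$. Then $$\mathrm{dist}(\xi,X_k)\le\frac{\kappa_\nabla}{\gamma}\|q_k-q^\star\|_2.$$ Moreover, for each $i\in\{1,\dots,s\}$, letting $B_i=\{x\in\Omega:\|x-\xi_i\|_2\le\tau_0\}$, the set $X_k$ contains at most one point of $B_i$, and $A^*q_k(x)$ has the same (nonzero) sign as $A^*q^\star(\xi_i)$ for all $x\in B_i$.
   Context: Setting: $\Omega\subseteq\mathbb{R}^d$ nonempty open convex; $\mathcal{M}(\Omega)$ finite signed Radon measures with total variation norm $\|\cdot\|_{\mathcal{M}}$, $\mathcal{M}(\Omega')$ those supported in $\Omega'\subseteq\Omega$; $a_1,\dots,a_m\in\mathcal{C}_0(\Omega)\cap\mathcal{C}^2(\Omega)$ with uniformly bounded first and second derivatives; $(A\mu)_i=\int a_i\,d\mu$, $A^*q=\sum_iq_ia_i$. $f:\mathbb{R}^m\to\mathbb{R}$ convex, bounded below, differentiable with $L$-Lipschitz gradient; $f^*$ its conjugate. $J(\mu)=\|\mu\|_{\mathcal{M}}+f(A\mu)$; $(\mathcal{P}(\Omega'))$: $\inf_{\mu\in\mathcal{M}(\Omega')}J(\mu)$; $(\mathcal{D}(\Omega'))$: $\sup\{-f^*(q):|A^*q(x)|\le1\ \forall x\in\Omega'\}$; $(\mathcal{P}),(\mathcal{D})$ for $\Omega'=\Omega$.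 Standing: all these problems used have solutions and no duality gap. Exchange algorithm: given $\Omega_0\subseteq\Omega$, $q_k$ is the solution of $(\mathcal{D}(\Omega_k))$, $X_k$ the set of local maximizers $x\in\Omega$ of $|A^*q_k|$ with $|A^*q_k(x)|>1$, $\Omega_{k+1}=\Omega_k\cup X_k$. For $Y,Z\subseteq\mathbb{R}^d$: $\mathrm{dist}(Y,Z)=\sup_{z\in Z}\inf_{y\in Y}\|y-z\|_2$; for a point $x$, $\mathrm{dist}(x,\xi)=\min_i\|x-\xi_i\|_2$. Constants: $\kappa=\sup_{\|q\|_2\le1}\|A^*q\|_\infty$, $\kappa_\nabla=\sup_{\|q\|_2\le1}\sup_{x}\|\nabla(A^*q)(x)\|_2$, $\kappa_{\mathrm{hess}}=\sup_{\|q\|_2\le1}\sup_x\|\nabla^2(A^*q)(x)\|_{\mathrm{op}}$. Source condition: $(\mathcal{P})$ has a unique solution $\mu^\star=\sum_{i=1}^s\alpha_i^\star\delta_{\xi_i}$ (distinct $\xi_i\in\Omega$, $\alpha_i^\star\ne0$), $\xi=\{\xi_1,\dots,\xi_s\}$; $q^\star$ is the solution of $(\mathcal{D})$; $|A^*q^\star(x)|=1$ iff $x\in\xi$; and there are $\tau_0>0,\gamma>0$ with: for all $x\in\Omega$ with $\mathrm{dist}(x,\xi)\le\tau_0$, $|A^*q^\star(x)|\ge\gamma\tau_0^2/2$ and $\nabla^2|A^*q^\star|(x)\preccurlyeq-\gamma\,\mathrm{Id}$; for all $x\in\Omega$ with $\mathrm{dist}(x,\xi)\ge\tau_0$, $|A^*q^\star(x)|\le1-\gamma\tau_0^2/2$.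 *)

(* Defs.v *)
From Stdlib Require Import Reals Lra.
Open Scope R_scope.

(* Points of R^n are represented by functions nat -> R whose coordinates
   of index >= n vanish (predicate [inR n]). *)
Definition pt := nat -> R.

Fixpoint fsum (n : nat) (f : nat -> R) : R :=
  match n with O => 0 | S n' => fsum n' f + f n' end.

Definition inR (n : nat) (x : pt) : Prop := forall i, (n <= i)%nat -> x i = 0.
Definition dot (n : nat) (x y : pt) : R := fsum n (fun i => x i * y i).
Definition norm2 (n : nat) (x : pt) : R := sqrt (dot n x x).
Definition vadd (x y : pt) : pt := fun i => x i + y i.
Definition vsub (x y : pt) : pt := fun i => x i - y i.
Definition vscal (t : R) (x : pt) : pt := fun i => t * x i.
Definition dist_pt (n : nat) (x y : pt) : R := norm2 n (vsub x y).

(* matrices as nat -> pt (row j = H j) *)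
Definition matvec (n : nat) (H : nat -> pt) (v : pt) : pt :=
  fun j => fsum n (fun l => H j l * v l).
Definition quad (n : nat) (H : nat -> pt) (v : pt) : R := dot n v (matvec n H v).

Definition subset_Rd (d : nat) (O : pt -> Prop) : Prop := forall x, O x -> inR d x.
Definition is_open (d : nat) (O : pt -> Prop) : Prop :=
  forall x, O x -> exists r, 0 < r /\ forall y, inR d y -> dist_pt d y x < r -> O y.
Definition is_convex (O : pt -> Prop) : Prop :=
  forall x y t, O x -> O y -> 0 <= t <= 1 -> O (vadd x (vscal t (vsub y x))).
Definition is_compact_Rd (d : nat) (K : pt -> Prop) : Prop :=
  (forall x, K x -> inR d x) /\
  (exists M, forall x, K x -> norm2 d x <= M) /\
  (forall x, inR d x -> (forall r, 0 < r -> exists y, K y /\ dist_pt d y x < r) -> K x).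

Definition cont_on (d : nat) (O : pt -> Prop) (g : pt -> R) : Prop :=
  forall x, O x -> forall eps, 0 < eps -> exists del, 0 < del /\
    forall y, O y -> dist_pt d y x < del -> Rabs (g y - g x) < eps.

(* C_0(O): continuous and vanishing at the boundary / at infinity *)
Definition C0 (d : nat) (O : pt -> Prop) (g : pt -> R) : Prop :=
  cont_on d O g /\
  forall eps, 0 < eps -> exists K, is_compact_Rd d K /\ (forall x, K x -> O x) /\
    forall x, O x -> ~ K x -> Rabs (g x) < eps.

Definition frechet_grad (n : nat) (g : pt -> R) (x G : pt) : Prop :=
  inR n G /\
  forall eps, 0 < eps -> exists del, 0 < del /\
    forall h, inR n h -> norm2 n h < del ->
      Rabs (g (vadd x h) - g x - dot n G h) <= eps * norm2 n h.

Definition has_hessian (n : nat) (g : pt -> R) (x : pt) (H : nat -> pt) : Prop :=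
  exists r (G : pt -> pt), 0 < r /\
    (forall y, inR n y -> dist_pt n y x < r -> frechet_grad n g y (G y)) /\
    (forall j, (j < n)%nat -> frechet_grad n (fun y => G y j) x (H j)).

Definition Astar (m : nat) (a : nat -> pt -> R) (q : pt) (x : pt) : R :=
  fsum m (fun i => q i * a i x).
Definition DAstar (m : nat) (da : nat -> pt -> pt) (q : pt) (x : pt) : pt :=
  fun j => fsum m (fun i => q i * da i x j).
Definition D2Astar (m : nat) (d2a : nat -> pt -> nat -> pt) (q : pt) (x : pt)
  : nat -> pt := fun j l => fsum m (fun i => q i * d2a i x j l).

(* Standing assumptions on a_1..a_m (indexed 0..m-1): in C_0(Omega) and C^2(Omega)
   with gradients da and Hessians d2a, uniformly bounded. *)
Definition a_ok (d m : nat) (Omega : pt -> Prop) (a : nat -> pt -> R)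
  (da : nat -> pt -> pt) (d2a : nat -> pt -> nat -> pt) : Prop :=
  forall i, (i < m)%nat ->
    C0 d Omega (a i) /\
    (forall x, Omega x -> frechet_grad d (a i) x (da i x)) /\
    (forall x, Omega x -> forall j, (j < d)%nat ->
        frechet_grad d (fun y => da i y j) x (d2a i x j)) /\
    (forall j l, (j < d)%nat -> (l < d)%nat -> cont_on d Omega (fun y => d2a i y j l)) /\
    (exists M, forall x, Omega x ->
        norm2 d (da i x) <= M /\
        forall v, inR d v -> norm2 d (matvec d (d2a i x) v) <= M * norm2 d v).

Definition f_ok (m : nat) (f : pt -> R) (L : R) : Prop :=
  (forall y z t, inR m y -> inR m z -> 0 <= t <= 1 ->
     f (vadd y (vscal t (vsub z y))) <= (1 - t) * f y + t * f z) /\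
  (exists b, forall y, inR m y -> b <= f y) /\
  (exists gf : pt -> pt,
     (forall y, inR m y -> frechet_grad m f y (gf y)) /\
     (forall y z, inR m y -> inR m z ->
        norm2 m (vsub (gf y) (gf z)) <= L * norm2 m (vsub y z))).

(* Dual problem (D(Om)): sup { -f^*(q) : |A^*q(x)| <= 1 for all x in Om }. *)
Definition feasible (m : nat) (a : nat -> pt -> R) (Om : pt -> Prop) (q : pt) : Prop :=
  inR m q /\ forall x, Om x -> Rabs (Astar m a q x) <= 1.

(* f^*(q) <= f^*(q') in the extended reals, where
   f^*(q) = sup_{y in R^m} (<q,y> - f y) *)
Definition conj_le (m : nat) (f : pt -> R) (q q' : pt) : Prop :=
  forall y, inR m y -> forall eps, 0 < eps -> exists y', inR m y' /\
    dot m q y - f y <= dot m q' y' - f y' + eps.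

Definition dual_solution (m : nat) (f : pt -> R) (a : nat -> pt -> R)
  (Om : pt -> Prop) (q : pt) : Prop :=
  feasible m a Om q /\ forall q', feasible m a Om q' -> conj_le m f q q'.

Definition Xset (d m : nat) (a : nat -> pt -> R) (Omega : pt -> Prop) (q : pt)
  (x : pt) : Prop :=
  Omega x /\
  (exists r, 0 < r /\ forall y, Omega y -> dist_pt d y x < r ->
      Rabs (Astar m a q y) <= Rabs (Astar m a q x)) /\
  1 < Rabs (Astar m a q x).

(* Exchange algorithm run: Oseq k = Omega_k, q k = q_k *)
Definition exchange_run (d m : nat) (f : pt -> R) (a : nat -> pt -> R)
  (Omega Omega0 : pt -> Prop) (Oseq : nat -> pt -> Prop) (q : nat -> pt) : Prop :=
  (forall x, Oseq O x <-> Omega0 x) /\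
  (forall k x, Oseq (S k) x <-> (Oseq k x \/ Xset d m a Omega (q k) x)) /\
  (forall k, dual_solution m f a (Oseq k) (q k)).

(* t < c_q = gamma * min(tau0^2/(2 kappa), tau0/kappa_grad, 1/kappa_hess),
   with the convention 1/0 = +infinity (written multiplied out). *)
Definition below_cq (gamma tau0 kappa kappa_grad kappa_hess t : R) : Prop :=
  t * (2 * kappa) < gamma * tau0 ^ 2 /\
  t * kappa_grad < gamma * tau0 /\
  t * kappa_hess < gamma.

(* Main.v *)
Require Import Defs.
From Stdlib Require Import Reals Lra Lia FunctionalExtensionality Classical.
Open Scope R_scope.

Lemma fsum_ext n f g : (forall i, (i < n)%nat -> f i = g i) -> fsum n f = fsum n g.
Proof. induction n; simpl; intros H; auto. rewrite IHn, (H n); auto; intros; apply H; lia. Qed.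

Lemma fsum_plus n f g : fsum n (fun i => f i + g i) = fsum n f + fsum n g.
Proof. induction n; simpl; [lra|]. rewrite IHn; lra. Qed.

Lemma fsum_minus n f g : fsum n (fun i => f i - g i) = fsum n f - fsum n g.
Proof. induction n; simpl; [lra|]. rewrite IHn; lra. Qed.

Lemma fsum_scal n c f : fsum n (fun i => c * f i) = c * fsum n f.
Proof. induction n; simpl; [lra|]. rewrite IHn; lra. Qed.

Lemma fsum_zero n f : (forall i, (i < n)%nat -> f i = 0) -> fsum n f = 0.
Proof. induction n; simpl; intros H; auto. rewrite IHn, (H n); try lra; try lia. intros; apply H; lia. Qed.

Lemma fsum_nonneg n f : (forall i, (i < n)%nat -> 0 <= f i) -> 0 <= fsum n f.
Proof. induction n; simpl; intros H; [lra|]. assert (0 <= fsum n f) by (apply IHn; intros; apply H; lia).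
 assert (0 <= f n) by (apply H; lia). lra. Qed.

Lemma fsum_nonneg_zero n f : (forall i, (i < n)%nat -> 0 <= f i) -> fsum n f = 0 ->
  forall i, (i < n)%nat -> f i = 0.
Proof. induction n; simpl; intros H E i Hi; [lia|].
 assert (0 <= fsum n f) by (apply fsum_nonneg; intros; apply H; lia).
 assert (0 <= f n) by (apply H; lia).
 destruct (Nat.eq_dec i n) as [->|]; [lra|]. apply IHn; try lra; try lia. intros; apply H; lia. Qed.

Lemma dot_comm n x y : dot n x y = dot n y x.
Proof. unfold dot; apply fsum_ext; intros; ring. Qed.
Lemma dot_scal_r n x c y : dot n x (vscal c y) = c * dot n x y.
Proof. unfold dot, vscal; rewrite <- fsum_scal; apply fsum_ext; intros; ring. Qed.
Lemma dot_scal_l n x c y : dot n (vscal c x) y = c * dot n x y.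
Proof. unfold dot, vscal; rewrite <- fsum_scal; apply fsum_ext; intros; ring. Qed.
Lemma dot_add_l n x y z : dot n (vadd x y) z = dot n x z + dot n y z.
Proof. unfold dot, vadd; rewrite <- fsum_plus; apply fsum_ext; intros; ring. Qed.
Lemma dot_add_r n x y z : dot n z (vadd x y) = dot n z x + dot n z y.
Proof. unfold dot, vadd; rewrite <- fsum_plus; apply fsum_ext; intros; ring. Qed.
Lemma dot_sub_l n x y z : dot n (vsub x y) z = dot n x z - dot n y z.
Proof. unfold dot, vsub; rewrite <- fsum_minus; apply fsum_ext; intros; ring. Qed.
Lemma dot_sub_r n x y z : dot n z (vsub x y) = dot n z x - dot n z y.
Proof. unfold dot, vsub; rewrite <- fsum_minus; apply fsum_ext; intros; ring. Qed.
Lemma dot_pos n x : 0 <= dot n x x.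
Proof. unfold dot; apply fsum_nonneg; intros; nra. Qed.

Lemma norm2_nonneg n x : 0 <= norm2 n x.
Proof. unfold norm2; apply sqrt_pos. Qed.
Lemma norm2_sq n x : norm2 n x * norm2 n x = dot n x x.
Proof. unfold norm2; apply sqrt_sqrt, dot_pos. Qed.

Lemma norm2_scal n c x : norm2 n (vscal c x) = Rabs c * norm2 n x.
Proof. unfold norm2. rewrite dot_scal_l, dot_scal_r.
 replace (c * (c * dot n x x)) with (Rsqr c * dot n x x) by (unfold Rsqr; ring).
 rewrite sqrt_mult_alt by (apply Rle_0_sqr). rewrite sqrt_Rsqr_abs; auto. Qed.

Lemma CS n x y : Rabs (dot n x y) <= norm2 n x * norm2 n y.
Proof.
 set (A := dot n x x). set (B := dot n x y). set (C := dot n y y).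
 assert (Hq : forall l, 0 <= A - 2 * l * B + l * l * C).
 { intro l. pose proof (dot_pos n (vsub x (vscal l y))) as P.
   rewrite dot_sub_l, !dot_sub_r, !dot_scal_l, !dot_scal_r in P.
   rewrite (dot_comm n y x) in P. unfold A, B, C; nra. }
 assert (HB2 : B * B <= A * C).
 { assert (0 <= C) by apply dot_pos. assert (0 <= A) by apply dot_pos.
   destruct (Req_dec C 0) as [HC|HC].
   - assert (B = 0).
     { destruct (Req_dec B 0); auto. pose proof (Hq ((A + 1) / (2 * B))) as H1'.
       rewrite HC in H1'. replace (2 * ((A + 1) / (2 * B)) * B) with (A + 1) in H1' by (field; auto). lra. }
     rewrite H1, HC; nra.
   - pose proof (Hq (B / C)) as H1.
     assert (0 < C) by lra.
     replace (A - 2 * (B / C) * B + B / C * (B / C) * C) with (A - B * B / C) in H1 by (field; lra).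
     assert (0 <= A - B*B/C) by lra.
     assert (HH: 0 <= (A - B*B/C) * C) by (apply Rmult_le_pos; lra).
     replace ((A - B*B/C) * C) with (A*C - B*B) in HH by (field; lra). lra. }
 pose proof (norm2_sq n x). pose proof (norm2_sq n y).
 pose proof (norm2_nonneg n x). pose proof (norm2_nonneg n y).
 fold A in H. fold C in H0.
 apply Rsqr_incr_0_var. unfold Rsqr. rewrite <- Rabs_mult, Rabs_pos_eq by nra.
 replace (norm2 n x * norm2 n y * (norm2 n x * norm2 n y)) with (A * C) by (rewrite <- H, <- H0; ring). lra.
 nra.
Qed.

Lemma norm2_tri n x y : norm2 n (vadd x y) <= norm2 n x + norm2 n y.
Proof.
 pose proof (norm2_sq n (vadd x y)) as H. rewrite dot_add_l, !dot_add_r in H.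
 pose proof (norm2_sq n x). pose proof (norm2_sq n y). pose proof (CS n x y).
 rewrite (dot_comm n y x) in H.
 pose proof (norm2_nonneg n x). pose proof (norm2_nonneg n y). pose proof (norm2_nonneg n (vadd x y)).
 apply Rsqr_incr_0_var; unfold Rsqr; [|nra].
 pose proof (Rle_abs (dot n x y)). nra. Qed.

Lemma norm2_zero n x : inR n x -> norm2 n x = 0 -> x = (fun _ => 0).
Proof. intros Hx H. apply functional_extensionality; intro i.
 destruct (Nat.lt_ge_cases i n) as [Hi|Hi]; [|apply Hx; auto].
 pose proof (norm2_sq n x). rewrite H in H0.
 assert (x i * x i = 0). { apply (fsum_nonneg_zero n (fun i => x i * x i)); auto. intros; nra. unfold dot in H0; lra. }
 nra. Qed.

Lemma vsub_sym n x y : norm2 n (vsub x y) = norm2 n (vsub y x).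
Proof. replace (vsub x y) with (vscal (-1) (vsub y x)). rewrite norm2_scal. replace (Rabs (-1)) with 1 by (rewrite Rabs_left; lra). ring.
 apply functional_extensionality; intro; unfold vscal, vsub; ring. Qed.

Lemma vadd_scal0 y v : vadd y (vscal 0 v) = y.
Proof. apply functional_extensionality; intro; unfold vadd, vscal; ring. Qed.

Lemma inR_vadd n x y : inR n x -> inR n y -> inR n (vadd x y).
Proof. unfold inR, vadd; intros Hx Hy i Hi; rewrite Hx, Hy; auto; ring. Qed.
Lemma inR_vsub n x y : inR n x -> inR n y -> inR n (vsub x y).
Proof. unfold inR, vsub; intros Hx Hy i Hi; rewrite Hx, Hy; auto; ring. Qed.
Lemma inR_vscal n c x : inR n x -> inR n (vscal c x).
Proof. unfold inR, vscal; intros Hx i Hi; rewrite Hx; auto; ring. Qed.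

Lemma frechet_add n g1 g2 y G1 G2 : frechet_grad n g1 y G1 -> frechet_grad n g2 y G2 ->
  frechet_grad n (fun z => g1 z + g2 z) y (fun l => G1 l + G2 l).
Proof.
 intros [HG1 H1] [HG2 H2]. split. apply (inR_vadd n G1 G2); auto.
 intros eps He. destruct (H1 (eps/2)) as [d1 [Hd1 P1]]; [lra|].
 destruct (H2 (eps/2)) as [d2 [Hd2 P2]]; [lra|].
 exists (Rmin d1 d2); split; [apply Rmin_glb_lt; auto|].
 intros h Hh Hn. assert (norm2 n h < d1) by (eapply Rlt_le_trans; [apply Hn| apply Rmin_l]).
 assert (norm2 n h < d2) by (eapply Rlt_le_trans; [apply Hn| apply Rmin_r]).
 specialize (P1 h Hh H). specialize (P2 h Hh H0).
 change (fun l => G1 l + G2 l) with (vadd G1 G2). rewrite dot_add_l.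
 replace (g1 (vadd y h) + g2 (vadd y h) - (g1 y + g2 y) - (dot n G1 h + dot n G2 h))
   with ((g1 (vadd y h) - g1 y - dot n G1 h) + (g2 (vadd y h) - g2 y - dot n G2 h)) by ring.
 eapply Rle_trans. apply Rabs_triang. lra.
Qed.

Lemma frechet_scal n c g y G : frechet_grad n g y G ->
  frechet_grad n (fun z => c * g z) y (fun l => c * G l).
Proof.
 intros [HG H1]. split. apply (inR_vscal n c G); auto.
 intros eps He. destruct (H1 (eps/(Rabs c + 1))) as [d1 [Hd1 P1]].
 { apply Rdiv_lt_0_compat; auto. pose proof (Rabs_pos c); lra. }
 exists d1; split; auto. intros h Hh Hn. specialize (P1 h Hh Hn).
 change (fun l => c * G l) with (vscal c G). rewrite dot_scal_l.
 replace (c * g (vadd y h) - c * g y - c * dot n G h) with (c * (g (vadd y h) - g y - dot n G h)) by ring.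
 rewrite Rabs_mult. pose proof (Rabs_pos c). pose proof (norm2_nonneg n h).
 pose proof (Rabs_pos (g (vadd y h) - g y - dot n G h)).
 apply Rle_trans with (Rabs c * (eps / (Rabs c + 1) * norm2 n h)). apply Rmult_le_compat_l; auto.
 replace (Rabs c * (eps / (Rabs c + 1) * norm2 n h)) with ((Rabs c / (Rabs c + 1)) * (eps * norm2 n h)) by (field; lra).
 assert (Rabs c / (Rabs c + 1) <= 1). { apply Rmult_le_reg_r with (Rabs c + 1); [lra|]. unfold Rdiv. rewrite Rmult_assoc, Rinv_l; lra. }
 assert (0 <= eps * norm2 n h) by nra. nra.
Qed.

Lemma frechet_lin n m (c : nat -> R) (g : nat -> pt -> R) (G : nat -> pt) y :
 (forall i, (i < m)%nat -> frechet_grad n (g i) y (G i)) ->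
 frechet_grad n (fun z => fsum m (fun i => c i * g i z)) y (fun l => fsum m (fun i => c i * G i l)).
Proof.
 induction m; intros H.
 - simpl. split. intros i _; auto. intros eps He; exists 1; split; [lra|]. intros h _ _.
   unfold dot. rewrite fsum_zero by (intros; ring). rewrite Rminus_0_r, Rminus_0_r, Rabs_R0.
   pose proof (norm2_nonneg n h); nra.
 - simpl. apply frechet_add. apply IHm; intros; apply H; lia. apply frechet_scal, H; lia.
Qed.

Lemma frechet_cont n g y G : frechet_grad n g y G -> forall eps, 0 < eps -> exists del, 0 < del /\
  forall h, inR n h -> norm2 n h < del -> Rabs (g (vadd y h) - g y) < eps.
Proof.
 intros [HG H1] eps He. destruct (H1 1) as [d1 [Hd1 P1]]; [lra|].
 pose proof (norm2_nonneg n G).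
 exists (Rmin d1 (eps / (norm2 n G + 1))). split. apply Rmin_glb_lt; auto. apply Rdiv_lt_0_compat; lra.
 intros h Hh Hn. assert (norm2 n h < d1) by (eapply Rlt_le_trans; [apply Hn| apply Rmin_l]).
 assert (Hn2 : norm2 n h < eps / (norm2 n G + 1)) by (eapply Rlt_le_trans; [apply Hn| apply Rmin_r]).
 specialize (P1 h Hh H0). pose proof (CS n G h). pose proof (norm2_nonneg n h).
 replace (g (vadd y h) - g y) with ((g (vadd y h) - g y - dot n G h) + dot n G h) by ring.
 eapply Rle_lt_trans. apply Rabs_triang.
 assert (norm2 n h * (norm2 n G + 1) < eps).
 { apply Rmult_lt_reg_r with (/ (norm2 n G + 1)). apply Rinv_0_lt_compat; lra.
   rewrite Rmult_assoc, Rinv_r by lra. lra. }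
 nra.
Qed.

Lemma deriv_shift f t0 l : derivable_pt_lim (fun h => f (t0 + h)) 0 l -> derivable_pt_lim f t0 l.
Proof. unfold derivable_pt_lim. intros H eps He. destruct (H eps He) as [del P]. exists del.
 intros h Hh Hd. specialize (P h Hh Hd). rewrite Rplus_0_l, Rplus_0_r in P. auto. Qed.

Lemma line_lemma n g y G v : frechet_grad n g y G -> inR n v ->
  derivable_pt_lim (fun t => g (vadd y (vscal t v))) 0 (dot n G v).
Proof.
 intros [HG H1] Hv eps He. pose proof (norm2_nonneg n v).
 destruct (H1 (eps / (norm2 n v + 1))) as [d1 [Hd1 P1]]. apply Rdiv_lt_0_compat; lra.
 assert (Hp : 0 < d1 / (norm2 n v + 1)) by (apply Rdiv_lt_0_compat; lra).
 exists (mkposreal _ Hp). simpl. intros h Hh Hd. rewrite Rplus_0_l, vadd_scal0.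
 assert (Hn : norm2 n (vscal h v) < d1).
 { rewrite norm2_scal. apply Rle_lt_trans with (Rabs h * (norm2 n v + 1)). pose proof (Rabs_pos h); nra.
   apply Rmult_lt_reg_r with (/ (norm2 n v + 1)). apply Rinv_0_lt_compat; lra.
   rewrite Rmult_assoc, Rinv_r by lra. lra. }
 specialize (P1 _ (inR_vscal n h v Hv) Hn). rewrite dot_scal_r, norm2_scal in P1.
 assert (Hah : 0 < Rabs h) by (apply Rabs_pos_lt; auto).
 replace ((g (vadd y (vscal h v)) - g y) / h - dot n G v) with ((g (vadd y (vscal h v)) - g y - h * dot n G v) / h) by (field; auto).
 unfold Rdiv at 1. rewrite Rabs_mult, Rabs_inv.
 apply Rmult_lt_reg_r with (Rabs h); auto. rewrite Rmult_assoc, Rinv_l by lra.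
 eapply Rle_lt_trans. rewrite Rmult_1_r. apply P1.
 assert (eps / (norm2 n v + 1) * norm2 n v < eps).
 { apply Rmult_lt_reg_r with (norm2 n v + 1); [lra|]. unfold Rdiv.
   replace (eps * / (norm2 n v + 1) * norm2 n v * (norm2 n v + 1)) with (eps * norm2 n v * ((norm2 n v + 1) * / (norm2 n v + 1))) by ring.
   rewrite Rinv_r by lra. nra. }
 nra.
Qed.

Lemma line_lemma_t n g x G v t0 : frechet_grad n g (vadd x (vscal t0 v)) G -> inR n v ->
  derivable_pt_lim (fun t => g (vadd x (vscal t v))) t0 (dot n G v).
Proof.
 intros H Hv. apply deriv_shift.
 assert (E : (fun h => g (vadd x (vscal (t0 + h) v))) = (fun h => g (vadd (vadd x (vscal t0 v)) (vscal h v)))).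
 { apply functional_extensionality; intro h. f_equal. apply functional_extensionality; intro i.
   unfold vadd, vscal; ring. }
 rewrite E. apply line_lemma; auto. Qed.

Lemma small_h (del : posreal) r : 0 < r -> exists h, 0 < h /\ h < del /\ h < r.
Proof. intros Hr. pose proof (cond_pos del). exists (Rmin del r / 2).
 pose proof (Rmin_l del r). pose proof (Rmin_r del r).
 assert (0 < Rmin del r) by (apply Rmin_glb_lt; lra). lra. Qed.

Lemma deriv_onesided f l : derivable_pt_lim f 0 l ->
  (exists r, 0 < r /\ forall t, 0 < t < r -> f t <= f 0) -> l <= 0.
Proof.
 intros H [r [Hr P]]. destruct (Rle_lt_dec l 0) as [|Hl]; auto. exfalso.
 destruct (H (l/2)) as [del Hd]; [lra|].
 destruct (small_h del r Hr) as [h [H1 [H2 H3]]].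
 specialize (Hd h). rewrite Rplus_0_l in Hd. specialize (P h (conj H1 H3)).
 assert (Hq : (f h - f 0) / h <= 0).
 { unfold Rdiv. pose proof (Rinv_0_lt_compat h H1). nra. }
 assert (Rabs ((f h - f 0) / h - l) < l / 2) by (apply Hd; [lra| rewrite Rabs_pos_eq; lra]).
 apply Rabs_def2 in H0. lra.
Qed.

Lemma deriv_zero_max f l : derivable_pt_lim f 0 l ->
  (exists r, 0 < r /\ forall t, Rabs t < r -> f t <= f 0) -> l = 0.
Proof.
 intros H [r [Hr P]].
 assert (l <= 0). { apply (deriv_onesided f); auto. exists r; split; auto. intros; apply P; rewrite Rabs_pos_eq; lra. }
 destruct (Rle_lt_dec 0 l) as [|Hl]; [lra|]. exfalso.
 destruct (H (-l/2)) as [del Hd]; [lra|].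
 destruct (small_h del r Hr) as [h [H1 [H2 H3]]].
 specialize (Hd (-h)). rewrite Rplus_0_l in Hd. specialize (P (-h)).
 rewrite Rabs_Ropp, Rabs_pos_eq in P by lra. specialize (P H3).
 assert (Hq : 0 <= (f (-h) - f 0) / (-h)).
 { unfold Rdiv. pose proof (Rinv_0_lt_compat h H1). rewrite Rinv_opp. nra. }
 assert (Rabs ((f (-h) - f 0) / (-h) - l) < -l / 2) by (apply Hd; [lra| rewrite Rabs_Ropp, Rabs_pos_eq; lra]).
 apply Rabs_def2 in H4. lra.
Qed.

Lemma deriv_uniq_loc f g t0 l1 l2 : derivable_pt_lim f t0 l1 -> derivable_pt_lim g t0 l2 ->
  (exists e, 0 < e /\ forall t, Rabs (t - t0) < e -> f t = g t) -> l1 = l2.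
Proof.
 intros Hf Hg [e [He P]]. pose proof (derivable_pt_lim_minus f g t0 l1 l2 Hf Hg) as H.
 destruct (Req_dec l1 l2) as [|Hne]; auto. exfalso.
 assert (Hp : 0 < Rabs (l1 - l2)) by (apply Rabs_pos_lt; lra).
 destruct (H (Rabs (l1 - l2))) as [del Hd]; auto.
 destruct (small_h del e He) as [h [H1 [H2 H3]]].
 specialize (Hd h). unfold minus_fct in Hd.
 rewrite (P (t0 + h)), (P t0) in Hd by (replace (t0 + h - t0) with h by ring; try rewrite Rabs_pos_eq; lra || (rewrite Rminus_diag, Rabs_R0; lra)).
 replace ((g (t0 + h) - g (t0 + h) - (g t0 - g t0)) / h - (l1 - l2)) with (- (l1 - l2)) in Hd by (field; lra).
 rewrite Rabs_Ropp in Hd. assert (Rabs (l1 - l2) < Rabs (l1 - l2)) by (apply Hd; [lra| rewrite Rabs_pos_eq; lra]). lra.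
Qed.

Lemma cont_eps f t : (forall eps, 0 < eps -> exists del, 0 < del /\ forall t', Rabs (t' - t) < del -> Rabs (f t' - f t) < eps) -> continuity_pt f t.
Proof. intros H eps He. destruct (H eps He) as [del [Hd P]]. exists del; split; auto.
 intros x [_ Hx]. apply P. exact Hx. Qed.

Lemma deriv_fsum n (F : nat -> R -> R) (l c : nat -> R) t :
  (forall j, (j < n)%nat -> derivable_pt_lim (F j) t (l j)) ->
  derivable_pt_lim (fun u => fsum n (fun j => F j u * c j)) t (fsum n (fun j => l j * c j)).
Proof.
 induction n; intros H; simpl.
 - apply (derivable_pt_lim_const 0).
 - apply (derivable_pt_lim_plus (fun u => fsum n (fun j => F j u * c j)) (fun u => F n u * c n)).
   apply IHn; intros; apply H; lia.
   replace (l n * c n) with (l n * fct_cte (c n) t + F n t * 0) by (unfold fct_cte; ring).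
   apply (derivable_pt_lim_mult (F n) (fct_cte (c n))). apply H; lia. apply derivable_pt_lim_const.
Qed.

Lemma G1 d m Om a da d2a (Ha : a_ok d m Om a da d2a) p y : Om y ->
  frechet_grad d (Astar m a p) y (DAstar m da p y).
Proof. intros Hy. unfold Astar, DAstar. apply (frechet_lin d m p a (fun i => da i y)).
 intros i Hi. destruct (Ha i Hi) as [_ [H _]]. auto. Qed.

Lemma G2 d m Om a da d2a (Ha : a_ok d m Om a da d2a) p y j : Om y -> (j < d)%nat ->
  frechet_grad d (fun z => DAstar m da p z j) y (D2Astar m d2a p y j).
Proof. intros Hy Hj. unfold D2Astar, DAstar. apply (frechet_lin d m p (fun i z => da i z j) (fun i => d2a i y j)).
 intros i Hi. destruct (Ha i Hi) as [_ [_ [H _]]]. auto. Qed.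

Lemma PHI d m Om a da d2a (Ha : a_ok d m Om a da d2a) p x v c : Om (vadd x (vscal c v)) -> inR d v ->
  derivable_pt_lim (fun t => Astar m a p (vadd x (vscal t v))) c (dot d (DAstar m da p (vadd x (vscal c v))) v).
Proof. intros. apply line_lemma_t; auto. eapply G1; eauto. Qed.

Lemma PSI d m Om a da d2a (Ha : a_ok d m Om a da d2a) p x v c : Om (vadd x (vscal c v)) -> inR d v ->
  derivable_pt_lim (fun t => dot d (DAstar m da p (vadd x (vscal t v))) v) c
     (quad d (D2Astar m d2a p (vadd x (vscal c v))) v).
Proof. intros Hc Hv. unfold dot at 1.
 replace (quad d (D2Astar m d2a p (vadd x (vscal c v))) v) with
   (fsum d (fun j => dot d (D2Astar m d2a p (vadd x (vscal c v)) j) v * v j)).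
 apply (deriv_fsum d (fun j t => DAstar m da p (vadd x (vscal t v)) j)).
 intros j Hj. apply (line_lemma_t d (fun z => DAstar m da p z j)); auto. eapply G2; eauto.
 unfold quad, dot at 2, matvec. apply fsum_ext; intros; unfold dot; ring. Qed.

Lemma Astar_sub m a p1 p2 x : Astar m a (vsub p1 p2) x = Astar m a p1 x - Astar m a p2 x.
Proof. unfold Astar, vsub. rewrite <- fsum_minus. apply fsum_ext; intros; ring. Qed.
Lemma DAstar_sub m da p1 p2 x : DAstar m da (vsub p1 p2) x = vsub (DAstar m da p1 x) (DAstar m da p2 x).
Proof. apply functional_extensionality; intro j. unfold DAstar, vsub. rewrite <- fsum_minus. apply fsum_ext; intros; ring. Qed.
Lemma quad_D2_sub d m d2a p1 p2 y v : quad d (D2Astar m d2a (vsub p1 p2) y) v =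
  quad d (D2Astar m d2a p1 y) v - quad d (D2Astar m d2a p2 y) v.
Proof. unfold quad. rewrite <- dot_sub_r. f_equal. apply functional_extensionality; intro j.
 unfold matvec, vsub, D2Astar. rewrite <- fsum_minus. apply fsum_ext; intros l _.
 rewrite <- Rmult_minus_distr_r, <- fsum_minus. f_equal. apply fsum_ext; intros; ring. Qed.

Lemma Astar_scal m a c p x : Astar m a (vscal c p) x = c * Astar m a p x.
Proof. unfold Astar, vscal. rewrite <- fsum_scal. apply fsum_ext; intros; ring. Qed.
Lemma DAstar_scal m da c p x : DAstar m da (vscal c p) x = vscal c (DAstar m da p x).
Proof. apply functional_extensionality; intro j. unfold DAstar, vscal. rewrite <- fsum_scal. apply fsum_ext; intros; ring. Qed.
Lemma matvec_D2_scal d m d2a c p x v : matvec d (D2Astar m d2a (vscal c p) x) v = vscal c (matvec d (D2Astar m d2a p x) v).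
Proof. apply functional_extensionality; intro j. unfold matvec, D2Astar, vscal. rewrite <- fsum_scal. apply fsum_ext; intros.
 replace (fsum m (fun i0 => c * p i0 * d2a i0 x j i)) with (c * fsum m (fun i0 => p i0 * d2a i0 x j i)). ring.
 rewrite <- fsum_scal; apply fsum_ext; intros; ring. Qed.
Lemma matvec_scal d H c v : matvec d H (vscal c v) = vscal c (matvec d H v).
Proof. apply functional_extensionality; intro j. unfold matvec, vscal. rewrite <- fsum_scal. apply fsum_ext; intros; ring. Qed.

Lemma SL n (N : pt -> R) K : (forall c p, N (vscal c p) = Rabs c * N p) ->
  (forall p, inR n p -> norm2 n p <= 1 -> N p <= K) -> forall p, inR n p -> N p <= K * norm2 n p.
Proof.
 intros Hh Hb p Hp. pose proof (norm2_nonneg n p). destruct (Req_dec (norm2 n p) 0) as [H0|H0].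
 - rewrite H0, Rmult_0_r. destruct (Rle_lt_dec (N p) 0) as [|Hlt]; auto. exfalso.
   set (c := (Rabs K + 1) / N p). assert (0 < c) by (unfold c; apply Rdiv_lt_0_compat; [pose proof (Rabs_pos K)|]; lra).
   pose proof (Hb (vscal c p) (inR_vscal n c p Hp)) as B. rewrite norm2_scal, H0, Hh, Rabs_pos_eq in B by lra.
   assert (c * N p = Rabs K + 1) by (unfold c; field; lra). pose proof (Rle_abs K). pose proof (B ltac:(lra)). lra.
 - set (c := / norm2 n p). assert (0 < c) by (apply Rinv_0_lt_compat; lra).
   pose proof (Hb (vscal c p) (inR_vscal n c p Hp)) as B. rewrite norm2_scal, Hh, Rabs_pos_eq in B by lra.
   assert (c * norm2 n p = 1) by (unfold c; field; lra).
   specialize (B ltac:(lra)). apply Rmult_le_reg_l with c; auto.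
   replace (c * (K * norm2 n p)) with K by (unfold c; field; lra). auto.
Qed.

Definition clamp t := Rmax 0 (Rmin 1 t).
Lemma clamp_in t : 0 <= clamp t <= 1.
Proof. unfold clamp, Rmax, Rmin; repeat destruct Rle_dec; lra. Qed.
Lemma clamp_lip t u : Rabs (clamp t - clamp u) <= Rabs (t - u).
Proof. unfold clamp, Rmax, Rmin; repeat destruct Rle_dec; unfold Rabs; repeat destruct Rcase_abs; lra. Qed.
Lemma clamp_0 : clamp 0 = 0.
Proof. unfold clamp, Rmax, Rmin; repeat destruct Rle_dec; lra. Qed.
Lemma clamp_1 : clamp 1 = 1.
Proof. unfold clamp, Rmax, Rmin; repeat destruct Rle_dec; lra. Qed.

Lemma seg_dist d x0 y c : 0 <= c <= 1 -> dist_pt d (vadd x0 (vscal c (vsub y x0))) x0 <= dist_pt d y x0.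
Proof. intros Hc. unfold dist_pt.
 replace (vsub (vadd x0 (vscal c (vsub y x0))) x0) with (vscal c (vsub y x0))
  by (apply functional_extensionality; intro; unfold vsub, vadd, vscal; ring).
 rewrite norm2_scal, Rabs_pos_eq by lra. pose proof (norm2_nonneg d (vsub y x0)). nra. Qed.

Lemma seg_end x0 y : vadd x0 (vscal 1 (vsub y x0)) = y.
Proof. apply functional_extensionality; intro; unfold vsub, vadd, vscal; ring. Qed.

Lemma SC_lemma d m Om a da d2a (Ha : a_ok d m Om a da d2a) (Hsub : subset_Rd d Om) (Hconv : is_convex Om)
  p x0 tau : Om x0 ->
  (forall z, Om z -> dist_pt d z x0 <= tau -> Astar m a p z <> 0) ->
  forall y, Om y -> dist_pt d y x0 <= tau -> 0 < Astar m a p x0 * Astar m a p y.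
Proof.
 intros Hx0 Hnz y Hy Hdy. set (g := Astar m a p).
 assert (Hg0 : g x0 <> 0) by (apply Hnz; auto; unfold dist_pt; replace (vsub x0 x0) with (vscal 0 x0)
   by (apply functional_extensionality; intro; unfold vsub, vscal; ring); rewrite norm2_scal, Rabs_R0;
   pose proof (norm2_nonneg d (vsub y x0)); unfold dist_pt in Hdy; lra).
 assert (Hgy : g y <> 0) by (apply Hnz; auto).
 destruct (Rlt_le_dec 0 (g x0 * g y)) as [|Hle]; auto. exfalso.
 assert (Hneg : g x0 * g y < 0) by (destruct Hle as [|E]; auto; apply Rmult_integral in E; tauto).
 set (v := vsub y x0). set (P := fun t => vadd x0 (vscal (clamp t) v)).
 assert (HP : forall t, Om (P t)) by (intro t; apply Hconv; auto; apply clamp_in).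
 set (phi := fun t => - (g x0 * g (P t))).
 assert (Hv : inR d v) by (apply inR_vsub; apply Hsub; auto).
 assert (Hc : continuity phi).
 { intro t. apply cont_eps. intros eps He.
   destruct (frechet_cont d g (P t) _ (G1 d m Om a da d2a Ha p (P t) (HP t)) (eps / (Rabs (g x0) + 1))) as [del [Hd Pd]].
   { apply Rdiv_lt_0_compat; auto. pose proof (Rabs_pos (g x0)); lra. }
   pose proof (norm2_nonneg d v).
   exists (del / (norm2 d v + 1)). split. apply Rdiv_lt_0_compat; lra.
   intros t' Ht'. specialize (Pd (vscal (clamp t' - clamp t) v) (inR_vscal _ _ _ Hv)).
   replace (vadd (P t) (vscal (clamp t' - clamp t) v)) with (P t') in Pd
     by (apply functional_extensionality; intro; unfold P, vadd, vscal; ring).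
   assert (Rabs (g (P t') - g (P t)) < eps / (Rabs (g x0) + 1)).
   { apply Pd. rewrite norm2_scal. pose proof (clamp_lip t' t).
     apply Rle_lt_trans with (Rabs (t' - t) * norm2 d v). apply Rmult_le_compat_r; auto.
     apply Rle_lt_trans with (del / (norm2 d v + 1) * norm2 d v). apply Rmult_le_compat_r; auto; lra.
     unfold Rdiv. replace (del * / (norm2 d v + 1) * norm2 d v) with (del * (norm2 d v / (norm2 d v + 1))) by (field; lra).
     assert (norm2 d v / (norm2 d v + 1) < 1). { apply Rmult_lt_reg_r with (norm2 d v + 1); [lra|]. unfold Rdiv. rewrite Rmult_assoc, Rinv_l; lra. }
     nra. }
   unfold phi. replace (- (g x0 * g (P t')) - - (g x0 * g (P t))) with (- (g x0 * (g (P t') - g (P t)))) by ring.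
   rewrite Rabs_Ropp, Rabs_mult. pose proof (Rabs_pos (g x0)).
   apply Rle_lt_trans with (Rabs (g x0) * (eps / (Rabs (g x0) + 1))). apply Rmult_le_compat_l; lra.
   replace (Rabs (g x0) * (eps / (Rabs (g x0) + 1))) with (eps * (Rabs (g x0) / (Rabs (g x0) + 1))) by (field; lra).
   assert (Rabs (g x0) / (Rabs (g x0) + 1) < 1). { apply Rmult_lt_reg_r with (Rabs (g x0) + 1); [lra|]. unfold Rdiv. rewrite Rmult_assoc, Rinv_l; lra. }
   nra. }
 assert (E0 : P 0 = x0) by (unfold P; rewrite clamp_0; apply vadd_scal0).
 assert (E1 : P 1 = y) by (unfold P; rewrite clamp_1; apply seg_end).
 destruct (IVT phi 0 1 Hc ltac:(lra)) as [z [Hz Hphi]].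
 { unfold phi. rewrite E0. assert (0 < g x0 * g x0) by (apply Rsqr_pos_lt; auto). lra. }
 { unfold phi. rewrite E1. lra. }
 unfold phi in Hphi. assert (g (P z) = 0).
 { destruct (Rmult_integral (g x0) (g (P z))) as [|]; auto; lra. }
 revert H. apply Hnz; auto. unfold P. eapply Rle_trans; [apply seg_dist, clamp_in|]; auto.
Qed.

Lemma line_pt d y v t : inR d y -> inR d v -> inR d (vadd y (vscal t v)) /\ dist_pt d (vadd y (vscal t v)) y = Rabs t * norm2 d v.
Proof. intros. split. apply inR_vadd; auto; apply inR_vscal; auto.
 unfold dist_pt. rewrite <- norm2_scal. f_equal. apply functional_extensionality; intro; unfold vsub, vadd, vscal; ring. Qed.

Lemma small_line d v rho t : 0 < rho -> Rabs t < rho / (norm2 d v + 1) -> Rabs t * norm2 d v < rho.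
Proof. intros Hr Ht. pose proof (norm2_nonneg d v). pose proof (Rabs_pos t).
 assert (Rabs t * (norm2 d v + 1) < rho).
 { apply Rmult_lt_reg_r with (/ (norm2 d v + 1)). apply Rinv_0_lt_compat; lra.
   rewrite Rmult_assoc, Rinv_r by lra. lra. }
 nra. Qed.

Lemma DZ d m Om a da d2a (Ha : a_ok d m Om a da d2a) (Hsub : subset_Rd d Om) (Hop : is_open d Om)
  p z v : Xset d m a Om p z -> inR d v -> dot d (DAstar m da p z) v = 0.
Proof.
 intros [Hz [[r2 [Hr2 Hmax]] Hgt]] Hv. destruct (Hop z Hz) as [r1 [Hr1 Pr1]].
 set (g := Astar m a p). set (chi := fun t => g (vadd z (vscal t v))).
 pose proof (PHI d m Om a da d2a Ha p z v 0 ltac:(rewrite vadd_scal0; auto) Hv) as D0.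
 rewrite vadd_scal0 in D0. fold g in D0. fold chi in D0.
 set (rho := Rmin r1 r2 / (norm2 d v + 1)).
 assert (Hrho : 0 < rho) by (unfold rho; apply Rdiv_lt_0_compat; [apply Rmin_glb_lt|pose proof (norm2_nonneg d v)]; lra).
 assert (Hloc : forall t, Rabs t < rho -> Rabs (chi t) <= Rabs (chi 0)).
 { intros t Ht. unfold chi. rewrite vadd_scal0.
   destruct (line_pt d z v t (Hsub z Hz) Hv) as [Hin Hd].
   pose proof (small_line d v (Rmin r1 r2) t ltac:(apply Rmin_glb_lt; lra) Ht).
   assert (dist_pt d (vadd z (vscal t v)) z < r1) by (rewrite Hd; pose proof (Rmin_l r1 r2); lra).
   apply Hmax. apply Pr1; auto. rewrite Hd; pose proof (Rmin_r r1 r2); lra. }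
 assert (Hc0 : chi 0 = g z) by (unfold chi; rewrite vadd_scal0; auto).
 fold g in Hgt. destruct (Rle_lt_dec 0 (g z)) as [Hpos|Hneg].
 - apply (deriv_zero_max chi); auto. exists rho; split; auto. intros t Ht.
   specialize (Hloc t Ht). rewrite Hc0, (Rabs_pos_eq (g z)) in Hloc by lra. rewrite Hc0.
   pose proof (Rle_abs (chi t)). lra.
 - pose proof (derivable_pt_lim_opp chi 0 _ D0) as D1.
   assert (- dot d (DAstar m da p z) v = 0); [|lra].
   apply (deriv_zero_max (- chi)%F); auto. exists rho; split; auto. intros t Ht.
   specialize (Hloc t Ht). rewrite Hc0, (Rabs_left (g z)) in Hloc by lra. unfold opp_fct. rewrite Hc0.
   pose proof (Rle_abs (- chi t)). rewrite Rabs_Ropp in H. lra.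
Qed.

Lemma HR d m Om a da d2a (Ha : a_ok d m Om a da d2a) (Hsub : subset_Rd d Om) (Hop : is_open d Om)
  p y s H : Om y -> s * s = 1 -> 0 < s * Astar m a p y ->
  has_hessian d (fun z => Rabs (Astar m a p z)) y H ->
  forall v, inR d v -> s * quad d (D2Astar m d2a p y) v = quad d H v.
Proof.
 intros Hy Hs Hpos [r [G [Hr [HG HH]]]] v Hv. set (g := Astar m a p). fold g in Hpos, HG.
 destruct (Hop y Hy) as [r1 [Hr1 Pr1]].
 destruct (frechet_cont d g y _ (G1 d m Om a da d2a Ha p y Hy) (s * g y) Hpos) as [del [Hdel Pdel]].
 assert (Has : Rabs s = 1).
 { pose proof (Rabs_pos s). assert (Rabs s * Rabs s = 1) by (rewrite <- Rabs_mult, Hs; apply Rabs_R1). nra. }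
 set (rho := Rmin r (Rmin r1 del)).
 assert (Hrho : 0 < rho) by (unfold rho; repeat apply Rmin_glb_lt; auto).
 assert (Near : forall z, inR d z -> dist_pt d z y < rho ->
    Om z /\ Rabs (g z) = s * g z /\ frechet_grad d (fun z => Rabs (g z)) z (G z)).
 { intros z Hz Hdz. pose proof (Rmin_l r (Rmin r1 del)). pose proof (Rmin_r r (Rmin r1 del)).
   pose proof (Rmin_l r1 del). pose proof (Rmin_r r1 del). fold rho in H0, H1.
   split; [apply Pr1; auto; lra|]. split; [|apply HG; auto; lra].
   specialize (Pdel (vsub z y) (inR_vsub _ _ _ Hz (Hsub y Hy)) ltac:(unfold dist_pt in Hdz; lra)).
   replace (vadd y (vsub z y)) with z in Pdel by (apply functional_extensionality; intro; unfold vadd, vsub; ring).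
   assert (Rabs (s * (g z - g y)) < s * g y) by (rewrite Rabs_mult, Has; lra).
   pose proof (Rle_abs (- (s * (g z - g y)))). rewrite Rabs_Ropp in H5.
   assert (0 < s * g z) by lra.
   rewrite <- (Rmult_1_l (Rabs (g z))), <- Has, <- Rabs_mult. apply Rabs_pos_eq; lra. }
 set (rho' := rho / (norm2 d v + 1)).
 assert (Hrho' : 0 < rho') by (unfold rho'; apply Rdiv_lt_0_compat; [|pose proof (norm2_nonneg d v)]; lra).
 assert (Lp : forall t, Rabs t < rho' -> inR d (vadd y (vscal t v)) /\ dist_pt d (vadd y (vscal t v)) y < rho).
 { intros t Ht. destruct (line_pt d y v t (Hsub y Hy) Hv) as [Hin Hd]. split; auto. rewrite Hd. apply small_line; auto. }
 assert (E1 : forall t, Rabs t < rho' -> dot d (G (vadd y (vscal t v))) v = s * dot d (DAstar m da p (vadd y (vscal t v))) v).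
 { intros t Ht. destruct (Lp t Ht) as [Hin Hd]. destruct (Near _ Hin Hd) as [HOm [Habs Hfr]].
   apply (deriv_uniq_loc (fun u => Rabs (g (vadd y (vscal u v)))) (mult_real_fct s (fun u => g (vadd y (vscal u v)))) t).
   - apply (line_lemma_t d (fun z => Rabs (g z))); auto.
   - apply derivable_pt_lim_scal. apply (PHI d m Om a da d2a Ha); auto.
   - exists (rho' - Rabs t). split; [lra|]. intros u Hu.
     assert (Rabs u < rho'). { pose proof (Rabs_triang (u - t) t). replace (u - t + t) with u in H0 by ring. lra. }
     destruct (Lp u H0) as [Hin' Hd']. destruct (Near _ Hin' Hd') as [_ [Habs' _]].
     unfold mult_real_fct. auto. }
 assert (Om0 : Om (vadd y (vscal 0 v))) by (rewrite vadd_scal0; auto).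
 pose proof (PSI d m Om a da d2a Ha p y v 0 Om0 Hv) as D2. rewrite vadd_scal0 in D2.
 pose proof (derivable_pt_lim_scal _ s 0 _ D2) as D2'.
 assert (D1 : derivable_pt_lim (fun u => fsum d (fun j => G (vadd y (vscal u v)) j * v j)) 0
                 (fsum d (fun j => dot d (H j) v * v j))).
 { apply (deriv_fsum d (fun j u => G (vadd y (vscal u v)) j)). intros j Hj.
   apply (line_lemma d (fun z => G z j)); auto. }
 assert (quad d H v = fsum d (fun j => dot d (H j) v * v j)) as ->.
 { unfold quad, dot at 1, matvec. apply fsum_ext; intros. unfold dot. ring. }
 symmetry. apply (deriv_uniq_loc _ _ 0 _ _ D1 D2'). exists rho'. split; auto. intros t Ht.
 rewrite Rminus_0_r in Ht. unfold mult_real_fct. rewrite <- E1 by auto. reflexivity.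
Qed.

Theorem mainTheorem7
  (d m : nat) (Omega : pt -> Prop)
  (HOmsub : subset_Rd d Omega) (HOmne : exists x, Omega x)
  (HOmopen : is_open d Omega) (HOmconv : is_convex Omega)
  (a : nat -> pt -> R) (da : nat -> pt -> pt) (d2a : nat -> pt -> nat -> pt)
  (Ha : a_ok d m Omega a da d2a)
  (f : pt -> R) (L : R) (Hf : f_ok m f L)
  (kappa kappa_grad kappa_hess : R)
  (Hkappa : is_lub (fun r => exists q x, inR m q /\ norm2 m q <= 1 /\ Omega x /\
                      r = Rabs (Astar m a q x)) kappa)
  (Hkappa_grad : is_lub (fun r => exists q x, inR m q /\ norm2 m q <= 1 /\ Omega x /\
                      r = norm2 d (DAstar m da q x)) kappa_grad)
  (Hkappa_hess : is_lub (fun r => exists q x v, inR m q /\ norm2 m q <= 1 /\ Omega x /\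
                      inR d v /\ norm2 d v <= 1 /\
                      r = norm2 d (matvec d (D2Astar m d2a q x) v)) kappa_hess)
  (* source condition *)
  (s : nat) (xi : nat -> pt) (alpha : nat -> R) (qstar : pt)
  (Hxi : forall i, (i < s)%nat -> Omega (xi i))
  (Hxi_dist : forall i j, (i < s)%nat -> (j < s)%nat -> i <> j -> xi i <> xi j)
  (Halpha : forall i, (i < s)%nat -> alpha i <> 0)
  (Hqstar : dual_solution m f a Omega qstar)
  (Hsat : forall x, Omega x ->
            (Rabs (Astar m a qstar x) = 1 <-> exists i, (i < s)%nat /\ x = xi i))
  (tau0 gamma : R) (Htau0 : 0 < tau0) (Hgamma : 0 < gamma)
  (Hnear : forall x, Omega x ->
     (exists i, (i < s)%nat /\ dist_pt d x (xi i) <= tau0) ->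
     gamma * tau0 ^ 2 / 2 <= Rabs (Astar m a qstar x) /\
     exists H, has_hessian d (fun y => Rabs (Astar m a qstar y)) x H /\
       forall v, inR d v -> quad d H v <= - gamma * (norm2 d v) ^ 2)
  (Hfar : forall x, Omega x ->
     (forall i, (i < s)%nat -> tau0 <= dist_pt d x (xi i)) ->
     Rabs (Astar m a qstar x) <= 1 - gamma * tau0 ^ 2 / 2)
  (* exchange algorithm *)
  (Omega0 : pt -> Prop) (HOm0 : forall x, Omega0 x -> Omega x)
  (Oseq : nat -> pt -> Prop) (q : nat -> pt)
  (Hrun : exchange_run d m f a Omega Omega0 Oseq q)
  (k : nat)
  (Hk : below_cq gamma tau0 kappa kappa_grad kappa_hess (norm2 m (vsub (q k) qstar))) :
  (* dist(xi, X_k) <= kappa_grad/gamma * ||q_k - q*|| *)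
  (forall z, Xset d m a Omega (q k) z ->
     exists i, (i < s)%nat /\
       dist_pt d (xi i) z <= kappa_grad / gamma * norm2 m (vsub (q k) qstar)) /\
  (forall i, (i < s)%nat ->
     (forall x y, Xset d m a Omega (q k) x -> dist_pt d x (xi i) <= tau0 ->
                  Xset d m a Omega (q k) y -> dist_pt d y (xi i) <= tau0 -> x = y) /\
     (forall x, Omega x -> dist_pt d x (xi i) <= tau0 ->
        (0 < Astar m a qstar (xi i) /\ 0 < Astar m a (q k) x) \/
        (Astar m a qstar (xi i) < 0 /\ Astar m a (q k) x < 0))).
Proof.
 destruct Hrun as [_ [_ Hdual]]. destruct (Hdual k) as [[Hqk _] _].
 destruct Hqstar as [[Hqs Hfeas] _].
 destruct Hk as [Hk1 [Hk2 Hk3]].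
 set (D := vsub (q k) qstar). set (tD := norm2 m D). fold D tD in Hk1, Hk2, Hk3.
 assert (HD : inR m D) by (apply inR_vsub; auto).
 assert (HtD : 0 <= tD) by apply norm2_nonneg.
 assert (K0 : forall x, Omega x -> Rabs (Astar m a D x) <= kappa * tD).
 { intros x Hx. apply (SL m (fun p => Rabs (Astar m a p x))); auto.
   intros c p; simpl; rewrite Astar_scal, Rabs_mult; auto.
   intros p Hp Hn. destruct Hkappa as [Hub _]. apply Hub. exists p, x; auto. }
 assert (K1 : forall x, Omega x -> norm2 d (DAstar m da D x) <= kappa_grad * tD).
 { intros x Hx. apply (SL m (fun p => norm2 d (DAstar m da p x))); auto.
   intros c p; simpl; rewrite DAstar_scal, norm2_scal; auto.
   intros p Hp Hn. destruct Hkappa_grad as [Hub _]. apply Hub. exists p, x; auto. }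
 assert (K2a : forall x v, Omega x -> inR d v -> norm2 d v <= 1 ->
     norm2 d (matvec d (D2Astar m d2a D x) v) <= kappa_hess * tD).
 { intros x v Hx Hv Hnv. apply (SL m (fun p => norm2 d (matvec d (D2Astar m d2a p x) v))); auto.
   intros c p; simpl; rewrite matvec_D2_scal, norm2_scal; auto.
   intros p Hp Hn. destruct Hkappa_hess as [Hub _]. apply Hub. exists p, x, v; auto 10. }
 assert (K2 : forall x v, Omega x -> inR d v ->
     norm2 d (matvec d (D2Astar m d2a D x) v) <= kappa_hess * tD * norm2 d v).
 { intros x v Hx Hv. apply (SL d (fun v => norm2 d (matvec d (D2Astar m d2a D x) v))); auto.
   intros c w; simpl; rewrite matvec_scal, norm2_scal; auto. }
 assert (K1' : forall x v, Omega x -> Rabs (dot d (DAstar m da D x) v) <= kappa_grad * tD * norm2 d v).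
 { intros x v Hx. eapply Rle_trans; [apply CS|]. apply Rmult_le_compat_r; [apply norm2_nonneg|auto]. }
 assert (K2' : forall x v, Omega x -> inR d v ->
    Rabs (quad d (D2Astar m d2a D x) v) <= kappa_hess * tD * (norm2 d v * norm2 d v)).
 { intros x v Hx Hv. unfold quad. eapply Rle_trans; [apply CS|].
   pose proof (K2 x v Hx Hv). pose proof (norm2_nonneg d v). nra. }
 assert (Dec : forall x, Astar m a (q k) x = Astar m a qstar x + Astar m a D x).
 { intros x. unfold D. rewrite Astar_sub; ring. }
 assert (DecD : forall x v, dot d (DAstar m da (q k) x) v = dot d (DAstar m da qstar x) v + dot d (DAstar m da D x) v).
 { intros x v. unfold D. rewrite DAstar_sub, dot_sub_l; ring. }
 assert (DecQ : forall y v, quad d (D2Astar m d2a (q k) y) v = quad d (D2Astar m d2a qstar y) v + quad d (D2Astar m d2a D y) v).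
 { intros y v. unfold D. rewrite quad_D2_sub; ring. }
 assert (Hcpos : 0 < gamma * tau0 ^ 2 / 2) by (assert (0 < tau0 ^ 2) by (apply pow_lt; auto); nra).
 assert (KD : forall x, Omega x -> Rabs (Astar m a D x) < gamma * tau0 ^ 2 / 2).
 { intros x Hx. pose proof (K0 x Hx). lra. }
 assert (Hsig : forall i, (i < s)%nat -> Astar m a qstar (xi i) * Astar m a qstar (xi i) = 1).
 { intros i Hi. assert (Rabs (Astar m a qstar (xi i)) = 1) by (apply (Hsat (xi i) (Hxi i Hi)); exists i; auto).
   assert (Rabs (Astar m a qstar (xi i) * Astar m a qstar (xi i)) = 1) by (rewrite Rabs_mult, H; ring).
   rewrite Rabs_pos_eq in H0 by nra. auto. }
 assert (Habs1 : forall i, (i < s)%nat -> Rabs (Astar m a qstar (xi i)) = 1).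
 { intros i Hi. apply (Hsat (xi i) (Hxi i Hi)); exists i; auto. }
 assert (SCi : forall i, (i < s)%nat -> forall y, Omega y -> dist_pt d y (xi i) <= tau0 ->
     0 < Astar m a qstar (xi i) * Astar m a qstar y).
 { intros i Hi. apply (SC_lemma d m Omega a da d2a Ha HOmsub HOmconv); auto.
   intros z Hz Hdz. destruct (Hnear z Hz) as [Hb _]. exists i; auto.
   intro E. rewrite E, Rabs_R0 in Hb. lra. }
 assert (HRi : forall i, (i < s)%nat -> forall y, Omega y -> dist_pt d y (xi i) <= tau0 -> forall v, inR d v ->
     Astar m a qstar (xi i) * quad d (D2Astar m d2a qstar y) v <= - gamma * (norm2 d v) ^ 2).
 { intros i Hi y Hy Hdy v Hv. destruct (Hnear y Hy) as [_ [H [HH Hq]]]. exists i; auto.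
   rewrite (HR d m Omega a da d2a Ha HOmsub HOmopen qstar y _ H Hy (Hsig i Hi) (SCi i Hi y Hy Hdy) HH v Hv).
   auto. }
 assert (Sign3 : forall i, (i < s)%nat -> forall x, Omega x -> dist_pt d x (xi i) <= tau0 ->
     0 < Astar m a qstar (xi i) * Astar m a (q k) x).
 { intros i Hi x Hx Hdx. rewrite Dec. set (sg := Astar m a qstar (xi i)).
   pose proof (SCi i Hi x Hx Hdx) as P. fold sg in P.
   destruct (Hnear x Hx) as [Hb _]. exists i; auto.
   assert (Rabs (sg * Astar m a qstar x) = Rabs (Astar m a qstar x)) by (unfold sg; rewrite Rabs_mult, Habs1; auto; ring).
   rewrite Rabs_pos_eq in H by lra.
   assert (Rabs (sg * Astar m a D x) = Rabs (Astar m a D x)) by (unfold sg; rewrite Rabs_mult, Habs1; auto; ring).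
   pose proof (KD x Hx). pose proof (Rle_abs (- (sg * Astar m a D x))). rewrite Rabs_Ropp in H2. lra. }
 assert (Seg : forall x y t, Omega x -> Omega y -> 0 <= t <= 1 -> Omega (vadd x (vscal t (vsub y x)))).
 { intros; apply HOmconv; auto. }
 split.
 -
   intros z Hz. pose proof Hz as [HzO Hz'].
   assert (Hex : exists i, (i < s)%nat /\ dist_pt d z (xi i) < tau0).
   { apply NNPP. intro Hn.
     assert (Hall : forall i, (i < s)%nat -> tau0 <= dist_pt d z (xi i)).
     { intros i Hi. apply Rnot_lt_le. intro. apply Hn. exists i; auto. }
     pose proof (Hfar z HzO Hall). destruct Hz' as [_ Hgt]. rewrite Dec in Hgt.
     pose proof (Rabs_triang (Astar m a qstar z) (Astar m a D z)). pose proof (KD z HzO). lra. }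
   destruct Hex as [i [Hi Hdz]]. exists i. split; auto.
   set (sg := Astar m a qstar (xi i)). set (v := vsub z (xi i)).
   assert (Hv : inR d v) by (apply inR_vsub; apply HOmsub; auto).
   set (P := fun t => vadd (xi i) (vscal t v)).
   assert (HP : forall t, 0 <= t <= 1 -> Omega (P t)) by (intros; apply Seg; auto).
   assert (HPd : forall t, 0 <= t <= 1 -> dist_pt d (P t) (xi i) <= tau0)
     by (intros; eapply Rle_trans; [apply seg_dist; auto|lra]).
   destruct (MVT_cor2 (fun t => sg * dot d (DAstar m da qstar (P t)) v)
                      (fun c => sg * quad d (D2Astar m d2a qstar (P c)) v) 0 1 ltac:(lra)) as [c [Ec Hc]].
   { intros c Hc. apply (derivable_pt_lim_scal (fun t => dot d (DAstar m da qstar (P t)) v)).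
     apply (PSI d m Omega a da d2a Ha); [apply HP; lra|auto]. }
   assert (Hf0 : sg * dot d (DAstar m da qstar (P 0)) v <= 0).
   { pose proof (derivable_pt_lim_scal _ sg 0 _ (PHI d m Omega a da d2a Ha qstar (xi i) v 0 (HP 0 ltac:(lra)) Hv)) as Dp.
     apply (deriv_onesided _ _ Dp). exists 1; split; [lra|]. intros t Ht. unfold mult_real_fct.
     fold (P t). fold (P 0). unfold P at 2. rewrite vadd_scal0. change (Astar m a qstar (xi i)) with sg. pose proof (Hsig i Hi) as Hs; fold sg in Hs. rewrite Hs.
     pose proof (Hfeas (P t) (HP t ltac:(lra))). pose proof (Rle_abs (sg * Astar m a qstar (P t))).
     rewrite Rabs_mult in H0. replace (Rabs sg) with 1 in H0 by (symmetry; apply Habs1; auto). lra. }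
   assert (HP1 : P 1 = z) by apply seg_end.
   rewrite HP1 in Ec.
   pose proof (DZ d m Omega a da d2a Ha HOmsub HOmopen (q k) z v Hz Hv) as Hz0.
   rewrite DecD in Hz0.
   pose proof (HRi i Hi (P c) (HP c ltac:(lra)) (HPd c ltac:(lra)) v Hv) as Hcc. fold sg in Hcc.
   pose proof (K1' z v HzO). pose proof (K1 z HzO). pose proof (norm2_nonneg d (DAstar m da D z)).
   assert (Hs1 : - (sg * (- dot d (DAstar m da D z) v)) <= Rabs (dot d (DAstar m da D z) v)).
   { pose proof (Rle_abs (- (sg * (- dot d (DAstar m da D z) v)))). rewrite Rabs_Ropp, Rabs_mult, Rabs_Ropp in H2.
     replace (Rabs sg) with 1 in H2 by (symmetry; apply Habs1; auto). lra. }
   assert (Hmain : gamma * (norm2 d v * norm2 d v) <= kappa_grad * tD * norm2 d v).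
   { replace (dot d (DAstar m da qstar z) v) with (- dot d (DAstar m da D z) v) in Ec by lra.
     simpl in Hcc. lra. }
   unfold dist_pt. rewrite vsub_sym. fold v. pose proof (norm2_nonneg d v) as H3.
   replace (kappa_grad / gamma * tD) with ((kappa_grad * tD) / gamma) by (field; lra).
   apply Rmult_le_reg_l with gamma; auto. replace (gamma * (kappa_grad * tD / gamma)) with (kappa_grad * tD) by (field; lra).
   destruct (Rle_lt_dec (gamma * norm2 d v) (kappa_grad * tD)) as [|Hlt]; auto.
   assert (0 < norm2 d v) by (destruct H3 as [|E]; auto; rewrite <- E in Hlt; lra). nra.
 - intros i Hi. set (sg := Astar m a qstar (xi i)). split.
   + intros x y Hx Hdx Hy Hdy.
     pose proof Hx as [HxO _]. pose proof Hy as [HyO _].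
     set (v := vsub y x). assert (Hv : inR d v) by (apply inR_vsub; apply HOmsub; auto).
     assert (Hn0 : norm2 d v = 0).
     { destruct (Req_dec (norm2 d v) 0) as [|Hne]; auto. exfalso.
       assert (Hnv : 0 < norm2 d v) by (pose proof (norm2_nonneg d v); lra).
       set (P := fun t => vadd x (vscal t v)).
       assert (HP : forall t, 0 <= t <= 1 -> Omega (P t)) by (intros; apply Seg; auto).
       assert (HPd : forall t, 0 <= t <= 1 -> dist_pt d (P t) (xi i) <= tau0).
       { intros t Ht. unfold dist_pt.
         replace (vsub (P t) (xi i)) with (vadd (vscal (1 - t) (vsub x (xi i))) (vscal t (vsub y (xi i))))
           by (apply functional_extensionality; intro; unfold P, v, vadd, vsub, vscal; ring).
         eapply Rle_trans; [apply norm2_tri|]. rewrite !norm2_scal, !Rabs_pos_eq by lra.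
         unfold dist_pt in Hdx, Hdy. nra. }
       destruct (MVT_cor2 (fun t => sg * dot d (DAstar m da (q k) (P t)) v)
                      (fun c => sg * quad d (D2Astar m d2a (q k) (P c)) v) 0 1 ltac:(lra)) as [c [Ec Hc]].
       { intros c Hc. apply (derivable_pt_lim_scal (fun t => dot d (DAstar m da (q k) (P t)) v)).
         apply (PSI d m Omega a da d2a Ha); [apply HP; lra|auto]. }
       assert (HP0 : P 0 = x) by apply vadd_scal0.
       assert (HP1 : P 1 = y) by apply seg_end.
       rewrite HP0, HP1 in Ec.
       rewrite (DZ d m Omega a da d2a Ha HOmsub HOmopen (q k) x v Hx Hv) in Ec.
       rewrite (DZ d m Omega a da d2a Ha HOmsub HOmopen (q k) y v Hy Hv) in Ec.
       rewrite DecQ in Ec.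
       pose proof (HRi i Hi (P c) (HP c ltac:(lra)) (HPd c ltac:(lra)) v Hv) as Hcc. fold sg in Hcc.
       pose proof (K2' (P c) v (HP c ltac:(lra)) Hv).
       pose proof (Rle_abs (sg * quad d (D2Astar m d2a D (P c)) v)). rewrite Rabs_mult in H0.
       unfold sg in H0. rewrite (Habs1 i Hi) in H0. fold sg in H0.
       simpl in Hcc. assert (0 < norm2 d v * norm2 d v) by nra.
       assert (kappa_hess * tD * (norm2 d v * norm2 d v) < gamma * (norm2 d v * norm2 d v)) by nra.
       lra. }
     pose proof (norm2_zero d v Hv Hn0) as Hv0.
     apply functional_extensionality; intro j.
     assert (v j = 0) by (rewrite Hv0; auto). unfold v, vsub in H. lra.
   + intros x Hx Hdx. pose proof (Sign3 i Hi x Hx Hdx) as P. fold sg in P.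
     pose proof (Hsig i Hi) as Hs. fold sg in Hs.
     destruct (Rlt_le_dec 0 sg).
     * left. split; auto. nra.
     * right. assert (sg < 0) by (destruct r as [|E]; auto; rewrite E in Hs; lra). split; auto. nra.
Qed.
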